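(* Let $G$ be a graph with $n$ vertices and $m$ edges, let $0\leq \alpha <\alpha_0(G)$, and let $p$ be the positive inertia index of $A_{\alpha}(G)$. Then $$S_{p}(A_{\alpha}(G))\leq 2\alpha m +\frac{1}{2}\left(2m(1-\alpha)^2+\alpha^2Z_1\right)\sqrt{\frac{n(n-p)}{Z_1}},$$ where $Z_1$ is the first Zagreb index of $G$.
   Context: All graphs are simple and undirected. $A_{\alpha}(G)=\alpha D(G)+(1-\alpha)A(G)$, where $A(G)$ is the adjacency matrix and $D(G)$ the diagonal degree matrix. For a real symmetric matrix $M$ with eigenvalues $\lambda_1(M)\geq\cdots\geq\lambda_n(M)$, $S_k(M)=\sum_{i=1}^k\lambda_i(M)$. $\alpha_0(G)$ denotes the smallest $\alpha$ such that $A_{\alpha}(G)$ is positive semidefinite for all $\alpha_0(G)\leq\alpha\leq 1$. The positive inertia index of $A_\alpha(G)$ is its number of positive eigenvalues. $Z_1=\sum_{v\in V(G)}d_v^2$ is the first Zagreb index. *)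

(* Defs.v *)
From HB Require Import structures.
From mathcomp Require Import all_boot all_order all_algebra.
From mathcomp Require Import reals.
Set Implicit Arguments. Unset Strict Implicit. Unset Printing Implicit Defensive.
Import Order.TTheory GRing.Theory Num.Theory.
Local Open Scope ring_scope.

Definition simple_graph (n : nat) (e : rel 'I_n) : Prop :=
  (forall u v, e u v = e v u) /\ (forall v, ~~ e v v).

Definition deg (n : nat) (e : rel 'I_n) (v : 'I_n) : nat := #|[set u | e v u]|.

(* number of edges: unordered pairs {u,v}, counted as u < v *)
Definition nedges (n : nat) (e : rel 'I_n) : nat :=
  #|[set x : 'I_n * 'I_n | (x.1 < x.2)%N && e x.1 x.2]|.

Definition zagreb1 (n : nat) (e : rel 'I_n) : nat := (\sum_(v < n) (deg e v) ^ 2)%N.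

Definition adjmx (R : nzRingType) (n : nat) (e : rel 'I_n) : 'M[R]_n :=
  \matrix_(i, j) (e i j)%:R.

Definition degmx (R : nzRingType) (n : nat) (e : rel 'I_n) : 'M[R]_n :=
  \matrix_(i, j) (if i == j then (deg e i)%:R else 0).

Definition Aalpha (R : nzRingType) (n : nat) (e : rel 'I_n) (a : R) : 'M[R]_n :=
  a *: @degmx R n e + (1 - a) *: @adjmx R n e.

Definition psd (R : realType) (n : nat) (M : 'M[R]_n) : Prop :=
  forall x : 'cV[R]_n, 0 <= (x^T *m M *m x) 0 0.

(* a0 is alpha_0(G): the smallest a in [0,1] such that A_b(G) is PSD for all a <= b <= 1 *)
Definition psd_from (R : realType) (n : nat) (e : rel 'I_n) (a : R) : Prop :=
  forall b : R, a <= b -> b <= 1 -> psd (@Aalpha R n e b).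

Definition is_alpha0 (R : realType) (n : nat) (e : rel 'I_n) (a0 : R) : Prop :=
  0 <= a0 /\ a0 <= 1 /\ psd_from e a0 /\
  (forall a : R, 0 <= a -> a <= 1 -> psd_from e a -> a0 <= a).

Definition eigen_list (R : realType) (n : nat) (M : 'M[R]_n) (s : seq R) : Prop :=
  size s = n /\ sorted (fun x y : R => y <= x) s /\
  char_poly M = \prod_(x <- s) ('X - x%:P).

Definition Ssum (R : realType) (s : seq R) (k : nat) : R := \sum_(i < k) s`_i.

Definition pos_inertia (R : realType) (s : seq R) : nat := count (fun x => 0 < x) s.

(* Main.v *)
Require Import Defs.
From HB Require Import structures.
From mathcomp Require Import all_boot all_order all_algebra.
From mathcomp Require Import reals.
From mathcomp Require Import ring lra complex.
Import Order.TTheory GRing.Theory Num.Theory.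
Local Open Scope ring_scope.
Set Implicit Arguments. Unset Strict Implicit. Unset Printing Implicit Defensive.

Lemma char_poly_simil (F : fieldType) n (P B : 'M[F]_n) : P \in unitmx ->
  char_poly (invmx P *m B *m P) = char_poly B.
Proof.
move=> Pu; rewrite /char_poly /char_poly_mx.
set f := (@polyC F).
have Xe : ('X%:M : 'M[{poly F}]_n) = map_mx f (invmx P) *m 'X%:M *m map_mx f P.
  by rewrite -mulmxA -scalar_mxC mulmxA -map_mxM mulVmx // map_mx1 mul1mx.
rewrite !map_mxM {1}Xe -mulmxBl -mulmxBr !det_mulmx mulrC mulrA -det_mulmx -map_mxM.
by rewrite mulmxV // map_mx1 det1 mul1r.
Qed.



Section Spec.
Local Open Scope sesquilinear_scope.
Variable C : numClosedFieldType.

Lemma quad_form n (P : 'M[C]_n) (E x : 'rV[C]_n) :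
  (x *m (P^t* *m diag_mx E *m P) *m x^t*) 0 0 =
  \sum_k E 0 k * `|(x *m P^t*) 0 k| ^+ 2.
Proof.
have hy : P *m x^t* = (x *m P^t*)^t* by rewrite trmx_mul map_mxM trmxCK.
rewrite !mulmxA -[_ *m P *m _]mulmxA hy mxE.
apply: eq_bigr => k _; rewrite mul_mx_diag !mxE normCK; ring.
Qed.

Lemma quad_unit n (P : 'M[C]_n) (x : 'rV[C]_n) : P^t* *m P = 1%:M ->
  (x *m x^t*) 0 0 = \sum_k `|(x *m P^t*) 0 k| ^+ 2.
Proof.
move=> h; have := quad_form P (const_mx 1) x.
rewrite diag_const_mx mulmx1 h mulmx1 => ->.
by apply: eq_bigr => k _; rewrite mxE mul1r.
Qed.

Lemma rowvv n (x : 'rV[C]_n) : (x *m x^t*) 0 0 = \sum_k `|x 0 k| ^+ 2.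
Proof. by rewrite mxE; apply: eq_bigr => k _; rewrite !mxE normCK. Qed.

Lemma max_real (l : seq C) : l != [::] -> all (fun x => x \is Num.real) l ->
  exists2 x, x \in l & forall z, z \in l -> z <= x.
Proof.
elim: l => [//|y l IH] _ /= /andP[ry rl].
case: l IH rl => [|y' l'] IH rl.
  by exists y => [|z]; rewrite ?mem_head // inE => /eqP->.
have [//|x xl hx] := IH _ rl.
have rx : x \is Num.real by move/allP: rl; apply.
case: (real_leP ry rx) => hyx.
  exists x; first by rewrite inE xl orbT.
  by move=> z; rewrite inE => /orP[/eqP->//|]; apply: hx.
exists y; first by rewrite mem_head.
move=> z; rewrite inE => /orP[/eqP->//|/hx hz]; exact: le_trans hz (ltW hyx).
Qed.


Lemma spec_facts n (A : 'M[C]_n) (t : seq C) :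
  A \is hermsymmx -> char_poly A = \prod_(x <- t) ('X - x%:P) ->
  (forall i j, 0 <= A i j) ->
  [/\ \sum_(x <- t) x = \tr A, \sum_(x <- t) x ^+ 2 = \tr (A *m A) &
      (0 < n)%N -> exists2 mu, mu \in t &
         0 <= mu /\ \sum_j (\sum_i A i j) ^+ 2 <= n%:R * mu ^+ 2].
Proof.
move=> hA hc A0.
have := hermitian_normalmx hA => /orthomx_spectralP.
set P := spectralmx A; set D := spectral_diag A => E.
have PU : P \is unitarymx by apply: spectral_unitarymx.
have Pu : P \in unitmx by apply: unitarymx_unit.
have PP1 : P *m P^t* = 1%:M by apply/unitarymxP.
have P1P : P^t* *m P = 1%:M by rewrite -invmx_unitary // mulVmx.
rewrite invmx_unitary // in E.
have Dr : forall j, D 0 j \is Num.real.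
  by move=> j; have /mxOverP := hermitian_spectral_diag_real hA; apply.
have perm : perm_eq t [seq D 0 j | j <- enum 'I_n].
  apply: prod_XsubC_eq; rewrite -hc big_map big_enum /= E -invmx_unitary //.
  rewrite char_poly_simil // char_poly_trig ?diag_mx_is_trig //.
  by apply: eq_bigr => j _; rewrite mxE eqxx mulr1n.
have sumt : forall f : C -> C, \sum_(x <- t) f x = \sum_j f (D 0 j).
  by move=> f; rewrite (perm_big _ perm) big_map big_enum.
have trconj : forall X, \tr (P^t* *m X *m P) = \tr X.
  by move=> X; rewrite mxtrace_mulC mulmxA PP1 mul1mx.
have AA : A *m A = P^t* *m diag_mx (\row_j (D 0 j ^+ 2)) *m P.
  rewrite {1 2}E !mulmxA -[_ *m P *m P^t*]mulmxA PP1 mulmx1.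
  by rewrite -[_ *m diag_mx D *m diag_mx D]mulmxA mulmx_diag.
split.
- by rewrite sumt E trconj mxtrace_diag.
- by rewrite sumt AA trconj mxtrace_diag; apply: eq_bigr => j _; rewrite mxE.
move=> n0.
have [mu mul mumax] : exists2 mu, mu \in [seq D 0 j | j <- enum 'I_n] &
    forall j, D 0 j <= mu.
  have [||mu mul hmu] := @max_real [seq D 0 j | j <- enum 'I_n].
  - by rewrite -size_eq0 size_map size_enum_ord -lt0n.
  - by apply/allP => x /mapP[j _ ->].
  by exists mu => // j; apply: hmu; apply: map_f; rewrite mem_enum.
have mur : mu \is Num.real by move/mapP: mul => [j _ ->].
have normD : forall j, `|D 0 j| <= mu.
  move=> j; set v := row j P.
  have hv : v *m A = D 0 j *: v.
    rewrite /v -row_mul E !mulmxA PP1 mul1mx mul_diag_mx.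
    by apply/rowP => k; rewrite !mxE.
  have hvv : (v *m v^t*) 0 0 = 1.
    have /matrixP/(_ j j) := PP1; rewrite !mxE eqxx mulr1n => <-.
    by apply: eq_bigr => k _; rewrite !mxE.
  have Dj : D 0 j = (v *m A *m v^t*) 0 0.
    by rewrite hv -scalemxAl mxE hvv mulr1.
  set w := map_mx (@Num.norm _ C) v.
  have wvv : (w *m w^t*) 0 0 = 1.
    by rewrite -hvv !rowvv; apply: eq_bigr => k _; rewrite mxE normr_id.
  apply: (@le_trans _ _ ((w *m A *m w^t*) 0 0)).
    rewrite Dj !mxE (le_trans (ler_norm_sum _ _ _)) //.
    apply: ler_sum => k _; rewrite !mxE normrM norm_conjC geC0_conj //.
    apply: ler_wpM2r => //; apply: (le_trans (ler_norm_sum _ _ _)).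
    apply: ler_sum => l _; rewrite !mxE normrM (ger0_norm (A0 _ _)) //.
  rewrite {1}E quad_form (quad_unit _ P1P) in wvv *.
  rewrite -[mu]mulr1 -wvv mulr_sumr; apply: ler_sum => k _.
  by rewrite ler_wpM2r ?exprn_ge0.
have mu0 : 0 <= mu.
  have [j0 _ _] := mapP mul; exact: (le_trans (normr_ge0 (D 0 j0)) (normD j0)).
exists mu; first by rewrite (perm_mem perm).
split => //.
set x := const_mx 1 : 'rV[C]_n.
have xA : x *m A *m A *m x^t* = (x *m A) *m (x *m A)^t*.
  rewrite -mulmxA; congr (_ *m _).
  have hA2 : A^t* = A by rewrite {2}(eqP hA) expr0 scale1r.
  by rewrite trmx_mul map_mxM hA2.
have e1 : (x *m A *m A *m x^t*) 0 0 = \sum_j (\sum_i A i j) ^+ 2.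
  rewrite xA rowvv; apply: eq_bigr => j _.
  rewrite !mxE ger0_norm; first by congr (_ ^+ 2); apply: eq_bigr => i _; rewrite !mxE mul1r.
  by apply: sumr_ge0 => i _; rewrite !mxE mul1r.
have e2 : (x *m x^t*) 0 0 = n%:R.
  rewrite rowvv (eq_bigr (fun _ => 1)); last by move=> k _; rewrite mxE normr1 expr1n.
  by rewrite sumr_const card_ord.
rewrite -e1 -e2 -[x *m A *m A]mulmxA AA quad_form (quad_unit _ P1P) mulr_suml.
apply: ler_sum => k _; rewrite mxE [_ * mu ^+ 2]mulrC ler_wpM2r ?exprn_ge0 //.
rewrite -real_normK // expr2 [_ ^+ 2]expr2.
by apply: ler_pM => //; apply: normD.
Qed.

End Spec.

Section Alg.
Variable R : realType.

Lemma Ssum_pos (s : seq R) : sorted (fun x y : R => y <= x) s ->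
  Ssum s (pos_inertia s) = \sum_(x <- s | 0 < x) x.
Proof.
rewrite /Ssum /pos_inertia.
elim: s => [|x s IH] /=; first by rewrite big_ord0 big_nil.
move=> hp; have hs := path_sorted hp.
rewrite big_cons; case: ifP => hx.
  by rewrite add1n big_ord_recl /= IH.
have htr : transitive (fun x y : R => y <= x).
  by move=> a b c hba hcb; exact: le_trans hcb hba.
have hall := order_path_min htr hp.
have hc : count (fun y => 0 < y) s = 0%N.
  apply/eqP; rewrite -leqn0 leqNgt -has_count; apply/hasP => -[y ys hy].
  move/allP: hall => /(_ y ys) hyx; move/negbT: hx; rewrite -leNgt => hx.
  by move: (lt_le_trans hy (le_trans hyx hx)); rewrite ltxx.
rewrite hc add0n big_ord0 big1_seq // => y /andP[hy ys].
move/allP: hall => /(_ y ys) hyx; move/negbT: hx; rewrite -leNgt => hx.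
by move: (lt_le_trans hy (le_trans hyx hx)); rewrite ltxx.
Qed.

Lemma sum_cst (l : seq R) (c : R) : \sum_(y <- l) c = (size l)%:R * c.
Proof.
elim: l => [|y l IH]; first by rewrite big_nil mul0r.
by rewrite big_cons IH /= -add1n natrD mulrDl mul1r.
Qed.

Lemma CS_seq (l : seq R) :
  (\sum_(x <- l) x) ^+ 2 <= (size l)%:R * \sum_(x <- l) x ^+ 2.
Proof.
have h : 0 <= \sum_(x <- l) \sum_(y <- l) (x - y) ^+ 2.
  by apply: sumr_ge0 => x _; apply: sumr_ge0 => y _; apply: sqr_ge0.
have e : \sum_(x <- l) \sum_(y <- l) (x - y) ^+ 2 =
    2%:R * ((size l)%:R * \sum_(x <- l) x ^+ 2 - (\sum_(x <- l) x) ^+ 2).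
  rewrite (eq_bigr (fun x => (size l)%:R * x ^+ 2 + \sum_(y <- l) y ^+ 2
                          - 2%:R * x * \sum_(y <- l) y)); last first.
    move=> x _; rewrite (eq_bigr (fun y => x ^+ 2 + y ^+ 2 - 2%:R * x * y)); last first.
      by move=> y _; ring.
    rewrite !big_split /= sum_cst sumrN mulr_sumr.
    by congr (_ + _ + _); apply: eq_bigr => y _; ring.
  rewrite !big_split /= sum_cst sumrN -mulr_sumr -mulr_suml expr2.
  rewrite -[\sum_(i <- l) 2 * i]mulr_sumr; ring.
move: h; rewrite e pmulr_rge0 ?ltr0n // subr_ge0 //.
Qed.

Lemma le_sum_mem (l : seq R) (f : R -> R) x : x \in l -> (forall y, 0 <= f y) ->
  f x <= \sum_(y <- l) f y.
Proof.
elim: l => [//|y l IH]; rewrite inE big_cons => /orP[/eqP->|xl] hf.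
  by rewrite lerDl sumr_ge0.
by rewrite (le_trans (IH xl hf)) // lerDr.
Qed.

Lemma le_csqrt (N c y : R) : 0 <= N -> 0 <= c -> 0 <= y -> N ^+ 2 <= c ^+ 2 * y ->
  N <= c * Num.sqrt y.
Proof.
move=> N0 c0 y0 h.
rewrite -(ger0_norm N0) -sqrtr_sqr -(ger0_norm c0) -sqrtr_sqr -sqrtrM ?sqr_ge0 //.
by rewrite ler_sqrt // mulr_ge0 ?sqr_ge0.
Qed.

Lemma alg (s : seq R) (n : nat) (T1 T2 Z : R) :
  size s = n -> sorted (fun x y : R => y <= x) s ->
  \sum_(x <- s) x = T1 -> \sum_(x <- s) x ^+ 2 = T2 -> 0 <= Z ->
  (Z = 0 -> T2 = 0) ->
  (0 < Z -> exists2 mu, mu \in s & 0 <= mu /\ Z <= n%:R * mu ^+ 2) ->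
  Ssum s (pos_inertia s) <= T1 + 2^-1 * T2 *
     Num.sqrt (n%:R * (n - pos_inertia s)%:R / Z).
Proof.
move=> hsz hso h1 h2 Z0 hZ0 hZ.
rewrite Ssum_pos //.
set a := (fun x : R => 0 < x).
set ln := [seq x <- s | ~~ a x].
set N := - \sum_(x <- ln) x.
set Q := \sum_(x <- ln) x ^+ 2.
set P2 := \sum_(x <- s | a x) x ^+ 2.
have hk : (n - pos_inertia s)%N = size ln.
  by rewrite -hsz -(count_predC a s) /pos_inertia addKn size_filter.
have eT1 : T1 = \sum_(x <- s | a x) x - N.
  by rewrite /N opprK /ln big_filter -h1 (bigID a) /=.
have eT2 : T2 = P2 + Q.
  by rewrite /Q /ln big_filter -h2 (bigID a).
have N0 : 0 <= N.
  rewrite /N -sumrN big_seq sumr_ge0 // => x; rewrite /ln mem_filter /a -leNgt => /andP[hx _].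
  by rewrite oppr_ge0.
have Q0 : 0 <= Q by apply: sumr_ge0 => x _; apply: sqr_ge0.
have P20 : 0 <= P2 by apply: sumr_ge0 => x _; apply: sqr_ge0.
have T20 : 0 <= T2 by rewrite eT2 addr_ge0.
have CS : N ^+ 2 <= (size ln)%:R * Q by rewrite /N sqrrN CS_seq.
suff hN : N <= 2^-1 * T2 * Num.sqrt (n%:R * (n - pos_inertia s)%:R / Z).
  have -> : \sum_(x <- s | a x) x = T1 + N by rewrite eT1 subrK.
  by rewrite lerD2l.
have [Ze|Zpos] := eqVneq Z 0.
  have T2e := hZ0 Ze.
  have Qe : Q = 0 by apply/eqP; rewrite eq_le Q0 andbT -T2e eT2 lerDr.
  have hN2 : N ^+ 2 <= 0 by rewrite Qe mulr0 in CS.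
  rewrite T2e mulr0 mul0r.
  have : N ^+ 2 == 0 by rewrite eq_le hN2 sqr_ge0.
  by rewrite sqrf_eq0 => /eqP->.
have Zp : 0 < Z by rewrite lt_def Zpos Z0.
have [mu mus [mu0 hmu]] := hZ Zp.
have P2mu : mu ^+ 2 <= P2.
  rewrite /P2 big_mkcond /=.
  have hf : forall y, 0 <= (fun y => if a y then y ^+ 2 else 0) y.
    by move=> y /=; case: ifP => //; rewrite sqr_ge0.
  apply: (le_trans _ (le_sum_mem mus hf)) => /=.
  rewrite /a; case: ifP => // /negbT; rewrite -leNgt => hm.
  have mue : mu = 0 by apply/eqP; rewrite eq_le hm mu0.
  by rewrite mue expr0n.
apply: le_csqrt => //.
- by rewrite mulr_ge0 // invr_ge0 ler0n.
- by rewrite divr_ge0 // mulr_ge0 // ler0n.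
apply: (le_trans CS); rewrite hk.
set k := (size ln)%:R.
have k0 : 0 <= k by rewrite ler0n.
have key : 4%:R * Z * Q <= n%:R * T2 ^+ 2.
  have n0 : 0 <= (n%:R : R) by rewrite ler0n.
  apply: (@le_trans _ _ (4%:R * (n%:R * mu ^+ 2) * Q)).
    by rewrite ler_wpM2r // ler_wpM2l.
  apply: (@le_trans _ _ (4%:R * (n%:R * P2) * Q)).
    by rewrite ler_wpM2r // ler_wpM2l // ler_wpM2l.
  have := mulr_ge0 n0 (sqr_ge0 (P2 - Q)); rewrite eT2; nra.
have e : (2^-1 * T2) ^+ 2 * (n%:R * k / Z) = k * ((n%:R * T2 ^+ 2) / (4%:R * Z)).
  by field; rewrite Zpos.
rewrite e ler_wpM2l // ler_pdivlMr; last by rewrite mulr_gt0 // ltr0n.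
lra.
Qed.
End Alg.

Section G.
Variable R : realType.
Variables (n : nat) (e : rel 'I_n).

Lemma degR v : (deg e v)%:R = \sum_u (e v u)%:R :> R.
Proof.
rewrite /deg -sum1dep_card natr_sum big_mkcond /=.
by apply: eq_bigr => u _; case: (e v u).
Qed.

Lemma nedgesR : (nedges e)%:R = \sum_(u : 'I_n) \sum_(v : 'I_n) ((u < v)%N && e u v)%:R :> R.
Proof.
rewrite /nedges -sum1dep_card natr_sum big_mkcond /= pair_big /=.
by apply: eq_bigr => -[u v] _ /=; case: ((u < v)%N && e u v).
Qed.

Lemma handshake : simple_graph e -> \sum_v (deg e v)%:R = 2 * (nedges e)%:R :> R.
Proof.
move=> [hs hirr].
have h1 : forall v u, (e v u)%:R = ((v < u)%N && e v u)%:R + ((u < v)%N && e v u)%:R :> R.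
  move=> v u; case evu: (e v u); last by rewrite !andbF addr0.
  rewrite !andbT; case: (ltngtP v u) => h //=; rewrite ?addr0 ?add0r //.
  by move: (hirr v); rewrite (ord_inj h) -{1}(ord_inj h) evu.
rewrite (eq_bigr _ (fun v _ => degR v)).
rewrite (eq_bigr (fun v : 'I_n => \sum_(u : 'I_n) ((v < u)%N && e v u)%:R + \sum_(u : 'I_n) ((u < v)%N && e v u)%:R)); last first.
  by move=> v _; rewrite -big_split /=; apply: eq_bigr => u _; apply: h1.
rewrite big_split /= -nedgesR exchange_big /=.
rewrite (eq_bigr (fun u : 'I_n => \sum_(v : 'I_n) ((u < v)%N && e u v)%:R)); last first.
  by move=> u _; apply: eq_bigr => v _; rewrite hs.
by rewrite -nedgesR; ring.
Qed.
End G.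

Local Open Scope complex_scope.

Theorem theorem3p4 (R : realType) (n : nat) (e : rel 'I_n) (a a0 : R) (s : seq R) :
  simple_graph e ->
  is_alpha0 e a0 ->
  0 <= a -> a < a0 ->
  eigen_list (@Aalpha R n e a) s ->
  let m := (nedges e)%:R : R in
  let Z1 := (zagreb1 e)%:R : R in
  let p := pos_inertia s in
  Ssum s p <= 2 * a * m
    + 2^-1 * (2 * m * (1 - a) ^+ 2 + a ^+ 2 * Z1)
      * Num.sqrt (n%:R * (n - p)%:R / Z1).
Proof.
move=> hg [_ [a01 _]] ha aa0 [hsz [hso hcp]]; cbv zeta.
set m := (nedges e)%:R : R; set Z1 := (zagreb1 e)%:R : R.
have [hs hirr] := hg.
have a1 : a <= 1 by apply: le_trans (ltW aa0) a01.
set M := Aalpha e a.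
pose d := fun v : 'I_n => (deg e v)%:R : R.
have Mij : forall i j, M i j = (if i == j then a * d i else 0) + (1 - a) * (e i j)%:R.
  by move=> i j; rewrite !mxE; case: (i == j); rewrite ?mulr1n ?mulr0n ?mulr0.
have hand : \sum_v d v = 2 * m by apply: handshake.
have M0 : forall i j, 0 <= M i j.
  move=> i j; rewrite Mij addr_ge0 //; first by case: (i == j); rewrite // mulr_ge0 // ler0n.
  by rewrite mulr_ge0 ?subr_ge0 ?ler0n.
have tr1 : \tr M = 2 * a * m.
  rewrite /mxtrace (eq_bigr (fun i => a * d i)); last first.
    by move=> i _; rewrite Mij eqxx (negbTE (hirr i)) mulr0 addr0.
  by rewrite -mulr_sumr hand; ring.
have Z1E : Z1 = \sum_v d v ^+ 2.
  by rewrite /Z1 /zagreb1 natr_sum; apply: eq_bigr => v _; rewrite natrX.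
have tr2 : \tr (M *m M) = 2 * m * (1 - a) ^+ 2 + a ^+ 2 * Z1.
  rewrite /mxtrace (eq_bigr (fun i => a ^+ 2 * d i ^+ 2 + (1 - a) ^+ 2 * d i)); last first.
    move=> i _; rewrite mxE (eq_bigr (fun j => (if j == i then a ^+ 2 * d i ^+ 2 else 0) + (1 - a) ^+ 2 * (e i j)%:R)).
      by rewrite big_split /= -big_mkcond big_pred1_eq -mulr_sumr /d degR.
    move=> j _; rewrite !Mij [e j i]hs [i == j]eq_sym; case: eqP => [->|_].
      by rewrite (negbTE (hirr i)) !mulr0 !addr0 -expr2 exprMn.
    by rewrite !add0r; case: (e i j); rewrite ?mulr1 ?mulr0 //; ring.
  by rewrite big_split /= -!mulr_sumr hand Z1E; ring.
have colsum : forall j, \sum_i M i j = d j.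
  move=> j; rewrite (eq_bigr (fun i => (if i == j then a * d j else 0) + (1 - a) * (e j i)%:R)); last first.
    by move=> i _; rewrite Mij hs; case: eqP => [->|].
  rewrite big_split /= -big_mkcond /= big_pred1_eq -mulr_sumr /d -degR; ring.
pose f := real_complex R.
pose Mc := map_mx f M.
have herm : Mc \is hermsymmx.
  rewrite is_hermitianmxE expr0 scale1r; apply/eqP/matrixP => i j.
  have cj : forall x : R, Num.conj (x%:C) = x%:C := fun x => conjc_real x.
  rewrite /Mc !mxE /f cj eq_sym hs.
  by case: eqP => [->|].
have hcpc : char_poly Mc = \prod_(x <- map f s) ('X - x%:P).
  rewrite -map_char_poly hcp rmorph_prod big_map.
  by apply: eq_bigr => x _; apply: (map_polyXsubC (real_complex R)).
have Mc0 : forall i j, 0 <= Mc i j by move=> i j; rewrite mxE /f ler0c.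
have [hsum hsq hmu] := spec_facts herm hcpc Mc0.
have T2 : \sum_(x <- s) x ^+ 2 = 2 * m * (1 - a) ^+ 2 + a ^+ 2 * Z1.
  apply: (@complexI R); rewrite -tr2.
  rewrite rmorph_sum /=.
  rewrite (eq_bigr (fun x => (f x) ^+ 2)); last by move=> x _; rewrite rmorphXn.
  rewrite -(big_map f xpredT (fun x => x ^+ 2)) hsq -map_mxM /mxtrace rmorph_sum.
  by apply: eq_bigr => i _; rewrite mxE.
have T1 : \sum_(x <- s) x = 2 * a * m.
  apply: (@complexI R); rewrite -tr1.
  rewrite rmorph_sum /=.
  rewrite -(big_map f xpredT (fun x => x)) hsum /mxtrace rmorph_sum.
  by apply: eq_bigr => i _; rewrite mxE.
apply: (alg hsz hso T1 T2).
- by rewrite ler0n.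
- move=> Z0.
  have hm : 2 * m <= Z1.
    rewrite -hand Z1E; apply: ler_sum => v _; rewrite /d -natrX ler_nat.
    by case: (deg e v) => // k; rewrite expnS leq_pmulr.
  have m0 : m = 0.
    apply/eqP; rewrite eq_le ler0n andbT; rewrite Z0 in hm; lra.
  by rewrite m0 Z0; ring.
- move=> Zp.
  have n0 : (0 < n)%N.
    rewrite lt0n; apply/negP => /eqP n0.
    move: Zp; rewrite Z1E big1 ?ltxx // => v _.
    by have := ltn_ord v; rewrite {2}n0.
  have [mu mus [mu0 hmu2]] := hmu n0.
  have [x xs mue] := mapP mus.
  exists x => //; split.
    by rewrite -ler0c; move: mu0; rewrite mue.
  rewrite -lecR.
  have e1 : \sum_j (\sum_i Mc i j) ^+ 2 = Z1%:C.
    rewrite Z1E rmorph_sum; apply: eq_bigr => j _.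
    rewrite -colsum rmorphXn rmorph_sum /=; congr (_ ^+ 2).
    by apply: eq_bigr => i _; rewrite /Mc mxE.
  have e2 : (n%:R * x ^+ 2)%:C = n%:R * mu ^+ 2.
    by rewrite mue rmorphM rmorphXn rmorph_nat.
  by rewrite e2 -e1.
Qed.
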